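(* Let $A$ and $C$ be abelian groups and let $H$ be a central extension of $A$ by $C$ (written multiplicatively), with commutator pairing $\{a,b\}:=\tilde a\tilde b\tilde a^{-1}\tilde b^{-1}\in C$ for lifts $\tilde a,\tilde b\in H$ of $a,b\in A$. Let $H^{(2)}$ be the Baer square of $H$, and $h\mapsto h^{(2)}$ the canonical homomorphism $H\to H^{(2)}$ lifting $\mathrm{id}_A$ (so $c^{(2)}=c^2$ for $c\in C$). For a symmetric structure $\sigma$ on $H$ define the set-theoretic section $s_\sigma:A\to H^{(2)}$ by $s_\sigma(a):=[\tilde a\,\sigma(\tilde a)]^{-1}\,\tilde a^{(2)}$, where $\tilde a\in H$ is any lift of $a$ and $[\tilde a\,\sigma(\tilde a)]\in C$ (equivalently, $s_\sigma(a)$ is the trivialization of the $C$-torsor $H^{(2)}_a=H_a\cdot H_a$ given by $h\cdot h'\mapsto h\sigma(h')=\sigma(h)h'\in C$). Then $\sigma\mapsto s_\sigma$ is a bijection between the set of symmetric structures on $H$ and the set of set-theoretic sections $s:A\to H^{(2)}$ of the projection $H^{(2)}\to A$ satisfying $s(a)s(b)=s(ab)\{a,b\}$ for all $a,b\in A$.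
   Context: A symmetric structure on the central $C$-extension $H$ of $A$ is an automorphism $\sigma$ of the group $H$ such that $\sigma^2=\mathrm{id}_H$, $\sigma|_C=\mathrm{id}_C$, and $\sigma$ induces on $A=H/C$ the involution $a\mapsto a^{-1}$. For $a\in A$, $H_a\subset H$ denotes the preimage of $a$ (a $C$-torsor). The Baer square $H^{(2)}$ is the quotient of $H\times_A H$ by the subgroup $\{(c,c^{-1}):c\in C\}$; it is a central $C$-extension of $A$ with $C$ embedded via $c\mapsto (c,1)$, and $h^{(2)}$ is the class of $(h,h)$. *)

(* Defs.v *)
From HB Require Import structures.
From mathcomp Require Import all_boot monoid.

Set Implicit Arguments.
Unset Strict Implicit.
Unset Printing Implicit Defensive.

Local Open Scope group_scope.

Section CentralExtension.

Variables (C H A : groupType) (i : C -> H) (p : H -> A).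

Definition central_extension : Prop :=
  (forall x y : C, x * y = y * x) /\
  (forall x y : A, x * y = y * x) /\
  {morph i : x y / x * y} /\
  {morph p : x y / x * y} /\
  injective i /\
  (forall a : A, exists h : H, p h = a) /\
  (forall h : H, p h = 1 <-> exists c : C, h = i c) /\
  (forall (c : C) (h : H), i c * h = h * i c).

Definition symmetric_structure (sigma : H -> H) : Prop :=
  [/\ {morph sigma : x y / x * y},
      (forall h, sigma (sigma h) = h),
      (forall c : C, sigma (i c) = i c)
    & (forall h, p (sigma h) = (p h)^-1)].

(* Baer square H^(2): quotient of H x_A H by {(c, c^-1)}.  Elements are
   represented as equivalence classes (predicates on H * H). *)
Definition baer_rel (x : H * H) : H * H -> Prop :=
  fun y => exists c : C, y.1 = x.1 * i c /\ y.2 = x.2 * (i c)^-1.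

Definition baer_sq : Type :=
  { P : H * H -> Prop | exists x : H * H, p x.1 = p x.2 /\ P = baer_rel x }.

(* Group law on H^(2), on the level of classes (the product of two classes
   is again a class since i(C) is central). *)
Definition baer_mul (P Q : H * H -> Prop) : H * H -> Prop :=
  fun z => exists x y, [/\ P x, Q y & z = (x.1 * y.1, x.2 * y.2)].

Definition baer_C (c : C) : H * H -> Prop := baer_rel (i c, 1).

Definition baer_sq_of (h : H) : H * H -> Prop := baer_rel (h, h).

Definition baer_over (X : baer_sq) (a : A) : Prop :=
  forall x, sval X x -> p x.1 = a.

Definition baer_section (s : A -> baer_sq) : Prop :=
  forall a, baer_over (s a) a.

Definition commutator_compatible (s : A -> baer_sq) : Prop :=
  forall (ha hb : H) (c : C),
    i c = ha * hb * ha^-1 * hb^-1 ->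
    baer_mul (sval (s (p ha))) (sval (s (p hb)))
    = baer_mul (sval (s (p ha * p hb))) (baer_C c).

Definition is_s_sigma (sigma : H -> H) (s : A -> baer_sq) : Prop :=
  forall (h : H) (c : C), i c = h * sigma h ->
    sval (s (p h)) = baer_mul (baer_C c^-1) (baer_sq_of h).

End CentralExtension.

(* Main.v *)
Require Import Defs.
From HB Require Import structures.
From mathcomp Require Import all_boot monoid.
From Stdlib Require Import FunctionalExtensionality PropExtensionality ProofIrrelevance ClassicalEpsilon.

Local Open Scope group_scope.

Section Proofs.
Variables (C H A : groupType) (i : C -> H) (p : H -> A).
Hypothesis Ccomm : forall x y : C, x * y = y * x.
Hypothesis Acomm : forall x y : A, x * y = y * x.
Hypothesis imorph : {morph i : x y / x * y}.
Hypothesis pmorph : {morph p : x y / x * y}.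
Hypothesis iinj : injective i.
Hypothesis psurj : forall a : A, exists h : H, p h = a.
Hypothesis pker : forall h : H, p h = 1 <-> exists c : C, h = i c.
Hypothesis icent : forall (c : C) (h : H), i c * h = h * i c.

Lemma i1 : i 1 = 1.
Proof. apply: (mulgI (i 1)). by rewrite -imorph !mulg1. Qed.
Lemma iV c : i c^-1 = (i c)^-1.
Proof. apply: (mulgI (i c)). by rewrite -imorph !mulgV i1. Qed.
Lemma p1 : p 1 = 1.
Proof. apply: (mulgI (p 1)). by rewrite -pmorph !mulg1. Qed.
Lemma pV h : p h^-1 = (p h)^-1.
Proof. apply: (mulgI (p h)). by rewrite -pmorph !mulgV p1. Qed.
Lemma pi c : p (i c) = 1.
Proof. by apply/pker; exists c. Qed.
Lemma iCV c h : (i c)^-1 * h = h * (i c)^-1.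
Proof. by rewrite -iV icent. Qed.

Lemma brel_refl x : baer_rel i x x.
Proof. exists 1; by rewrite i1 invg1 !mulg1. Qed.
Lemma brel_sym {x y} : baer_rel i x y -> baer_rel i y x.
Proof.
case=> d [e1 e2]; exists d^-1; rewrite e1 e2 iV; split.
  by rewrite mulgK.
by rewrite invgK mulgVK.
Qed.
Lemma brel_trans {x y z} : baer_rel i x y -> baer_rel i y z -> baer_rel i x z.
Proof.
case=> d [e1 e2] [e [f1 f2]]; exists (d * e); rewrite f1 f2 e1 e2; split.
  by rewrite imorph mulgA.
by rewrite Ccomm imorph invgM mulgA.
Qed.
Lemma class_eq x y : baer_rel i x y -> baer_rel i x = baer_rel i y.
Proof.
move=> hxy; apply: functional_extensionality => z; apply: propositional_extensionality.
split => h; [exact: brel_trans (brel_sym hxy) h | exact: brel_trans hxy h].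
Qed.
Lemma class_eqE x y : baer_rel i x = baer_rel i y -> baer_rel i x y.
Proof. move=> e; rewrite e; exact: brel_refl. Qed.

Lemma bmul x y : baer_mul (baer_rel i x) (baer_rel i y) = baer_rel i (x.1 * y.1, x.2 * y.2).
Proof.
apply: functional_extensionality => z; apply: propositional_extensionality; split.
- case=> u [v [hu hv ->]]; case: hu => d [-> ->]; case: hv => e [-> ->].
  exists (d * e) => /=; split.
    rewrite imorph !mulgA; congr (_ * _); rewrite -!mulgA; congr (_ * _); by rewrite icent.
  rewrite Ccomm imorph invgM !mulgA; congr (_ * _); rewrite -!mulgA; congr (_ * _).
  by rewrite iCV.
- case=> d [e1 e2]; exists x, (y.1 * i d, y.2 * (i d)^-1); split.
  + exact: brel_refl.
  + by exists d.
  + by rewrite [z]surjective_pairing e1 e2 /= !mulgA.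
Qed.

Definition K c h := baer_rel i (i c * h, h).

Lemma K_eq c c' h : K c h = K c' h -> c = c'.
Proof.
move/class_eqE => [d [e1 e2]] /=; move: e1 e2 => /= e1 e2.
have hd : (i d)^-1 = 1 by apply: (mulgI h); rewrite -e2 mulg1.
have hd' : i d = 1 by rewrite -[i d]invgK hd invg1.
rewrite hd' mulg1 in e1.
by apply: iinj; apply: (mulIg h).
Qed.

Lemma K_shift c e h : K c (h * i e) = K (c * e * e) h.
Proof.
rewrite /K; apply: class_eq; exists e => /=; split; last by rewrite mulgK.
by rewrite !imorph -!mulgA (icent e (i e * h)) (icent e h) !mulgA.
Qed.

Lemma K_mul c c' h h' : baer_mul (K c h) (K c' h') = K (c * c') (h * h').
Proof.
rewrite /K bmul /= imorph; congr (baer_rel i (_, _)).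
rewrite !mulgA; congr (_ * _); rewrite -!mulgA; congr (_ * _); by rewrite icent.
Qed.

Lemma K_C c : baer_C i c = K c 1.
Proof. by rewrite /baer_C /K mulg1. Qed.

Lemma K_s c h : baer_mul (baer_C i c) (baer_sq_of i h) = K c h.
Proof. by rewrite /baer_C /baer_sq_of bmul /= mul1g. Qed.

Lemma rep (X : baer_sq i p) a h : baer_over X a -> p h = a -> exists c, sval X = K c h.
Proof.
case: X => P [x [hx eP]] hov ha; rewrite /baer_over /= in hov; rewrite /=; subst P.
have h1 : p x.1 = a := hov x (brel_refl x).
have h2 : p x.2 = a by rewrite -hx.
have [d hd] : exists d, h^-1 * x.2 = i d.
  have /pker [d hd] : p (h^-1 * x.2) = 1 by rewrite pmorph pV h2 ha mulVg.
  by exists d.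
have [f hf] : exists f, x.1 * h^-1 = i f.
  have /pker [f hf] : p (x.1 * h^-1) = 1 by rewrite pmorph pV h1 ha mulgV.
  by exists f.
exists (f * d); apply: class_eq; exists d => /=; split.
  have e1 : x.1 = i f * h by rewrite -hf mulgVK.
  by rewrite e1 imorph -!mulgA (icent d h).
have e2 : x.2 = h * i d by rewrite -hd mulVKg.
by rewrite e2 mulgK.
Qed.


Lemma bsq_eq (X Y : baer_sq i p) : sval X = sval Y -> X = Y.
Proof.
case: X => P hP; case: Y => Q hQ /= e; subst Q; congr exist; exact: proof_irrelevance.
Qed.

Lemma cK (c e : C) : (c * e * e)^-1 * e * e = c^-1.
Proof. by rewrite !invgM -!mulgA (Ccomm c^-1) -!mulgA !mulKg. Qed.

Section Sigma.
Variable sigma : H -> H.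
Hypothesis sp : forall h, p (sigma h) = (p h)^-1.

Lemma tc h : exists c, i c = h * sigma h.
Proof.
have /pker [c hc] : p (h * sigma h) = 1 by rewrite pmorph sp mulgV.
by exists c.
Qed.

Lemma sig_eq h c : i c = h * sigma h -> sigma h = h^-1 * i c.
Proof. by move=> ->; rewrite mulKg. Qed.
End Sigma.
Arguments tc {sigma}.
Arguments sig_eq {sigma h c}.

Lemma part1 sigma : symmetric_structure i p sigma ->
     exists s : A -> baer_sq i p,
       [/\ baer_section s, commutator_compatible s & is_s_sigma sigma s] /\
       (forall s' : A -> baer_sq i p, is_s_sigma sigma s' -> s' = s).
Proof.
case=> smor sinv sC sp.
pose goodX a (X : baer_sq i p) :=
  forall h c, i c = h * sigma h -> p h = a -> sval X = K c^-1 h.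
have ex a : exists X : baer_sq i p, goodX a X.
  have [h ha] := psurj a; have [c hc] := tc sp h.
  have hX : exists x : H * H, p x.1 = p x.2 /\ K c^-1 h = baer_rel i x.
    by exists (i c^-1 * h, h); split => //=; rewrite pmorph pi mul1g.
  exists (exist (fun P => exists x : H * H, p x.1 = p x.2 /\ P = baer_rel i x) _ hX : baer_sq i p) => h' c' hc' ha' /=.
  have [e he] : exists e, h^-1 * h' = i e.
    have /pker [e he] : p (h^-1 * h') = 1 by rewrite pmorph pV ha ha' mulVg.
    by exists e.
  have eh : h' = h * i e by rewrite -he mulVKg.
  subst h'.
  have ec : c' = c * e * e.
    apply: iinj; rewrite hc' smor sC !imorph hc.
    by rewrite -!mulgA (icent e (sigma h * i e)) !mulgA.
  by rewrite ec K_shift cK.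
have [s hs] : exists s : A -> baer_sq i p, forall a, goodX a (s a).
  exists (fun a => proj1_sig (constructive_indefinite_description _ (ex a))) => a.
  exact: proj2_sig (constructive_indefinite_description _ (ex a)).
exists s; split; first split.
- move=> a x hx.
  have [h ha] := psurj a; have [c hc] := tc sp h.
  rewrite (hs a h c hc ha) in hx.
  case: hx => d [-> _].
  by rewrite !pmorph !pi mul1g mulg1 ha.
- move=> ha hb c hc.
  have [ca hca] := tc sp ha; have [cb hcb] := tc sp hb; have [cab hcab] := tc sp (ha * hb).
  rewrite (hs _ ha ca hca erefl) (hs _ hb cb hcb erefl) -pmorph.
  rewrite (hs _ (ha * hb) cab hcab erefl) K_C !K_mul mulg1.
  have ecab : cab = c * ca * cb.
    apply: iinj; rewrite hcab smor (sig_eq hca) (sig_eq hcb) !imorph hc.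
    rewrite -!mulgA; congr (_ * (_ * _)).
    by rewrite [i ca * _]mulgA (icent ca hb^-1) -mulgA.
  rewrite ecab; congr K.
  by rewrite !invgM -mulgA mulgVK Ccomm.
- move=> h c hc; rewrite (hs _ h c hc erefl); by rewrite K_s.
move=> s' hs'; apply: functional_extensionality => a.
have [h ha] := psurj a; have [c hc] := tc sp h; subst a.
apply: bsq_eq; rewrite (hs' h c hc) (hs _ h c hc erefl); by rewrite K_s.
Qed.


Lemma part2 (s : A -> baer_sq i p) :
     baer_section s -> commutator_compatible s ->
     exists! sigma : H -> H, symmetric_structure i p sigma /\ is_s_sigma sigma s.
Proof.
move=> hsec hcomp.
have hf h : exists c, sval (s (p h)) = K c h := rep _ _ h (hsec (p h)) erefl.
have [f hfh] : exists f : H -> C, forall h, sval (s (p h)) = K (f h) h.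
  exists (fun h => proj1_sig (constructive_indefinite_description _ (hf h))) => h.
  exact: proj2_sig (constructive_indefinite_description _ (hf h)).
have f_shift h e : f (h * i e) = f h * e^-1 * e^-1.
  apply: (@K_eq _ _ (h * i e)); rewrite -hfh K_shift.
  rewrite !mulgVK -hfh.
  by rewrite pmorph pi mulg1.
have comm_ex x y : exists c, i c = x * y * x^-1 * y^-1.
  have /pker [c hc] : p (x * y * x^-1 * y^-1) = 1.
    by rewrite !pmorph !pV (Acomm (p x) (p y)) mulgK mulgV.
  by exists c.
have f_mul x y c : i c = x * y * x^-1 * y^-1 -> f x * f y = f (x * y) * c.
  move=> hc; apply: (@K_eq _ _ (x * y)).
  rewrite -K_mul -!hfh (hcomp _ _ _ hc) -pmorph hfh K_C K_mul mulg1 //.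
have f1 : f 1 = 1.
  have := f_mul 1 1 1; rewrite i1 invg1 !mulg1 => /(_ erefl) e.
  by apply: (mulgI (f 1)); rewrite mulg1.
have fV h : f h^-1 = (f h)^-1.
  have := f_mul h h^-1 1; rewrite i1 invgK mulgV mul1g mulVg => /(_ erefl).
  by rewrite f1 mulg1 => /mulg1_eq e; exact: esym e.
pose sigma h := h^-1 * i (f h)^-1.
have sp h : p (sigma h) = (p h)^-1 by rewrite /sigma pmorph pV pi mulg1.
exists sigma; split; first split; first split.
- move=> x y; have [c hc] := comm_ex x y.
  have e : f (x * y) = f x * f y * c^-1 by rewrite (f_mul x y c hc) mulgK.
  rewrite /sigma e !invgM invgK !imorph hc.
  rewrite !mulgA mulgVK mulVg mul1g -[x^-1 * i (f x)^-1 * y^-1]mulgA (icent _ y^-1) !mulgA.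
  by rewrite -[RHS]mulgA (icent (f x)^-1 (i (f y)^-1)) mulgA.
- move=> h; rewrite /sigma.
  have e : f (h^-1 * i (f h)^-1) = f h by rewrite f_shift fV invgK mulVg mul1g.
  by rewrite e invgM iCV invgK mulgVK.
- move=> c; rewrite /sigma.
  have e : f (i c) = c^-1 * c^-1 by rewrite -[i c]mul1g f_shift f1 mul1g.
  by rewrite e invgM invgK imorph mulKg.
- exact: sp.
- move=> h c; rewrite /sigma mulVKg => /iinj ->.
  by rewrite hfh K_s invgK.
move=> sigma' [[smor sinv sC sp'] hs']; apply: functional_extensionality => h.
have [c hc] := tc sp' h.
have := hs' h c hc; rewrite hfh K_s /sigma => /K_eq ->.
by rewrite invgK (sig_eq hc).
Qed.

End Proofs.

Theorem lemma1p2 (C H A : groupType) (i : C -> H) (p : H -> A) :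
  central_extension i p ->
  (* sigma |-> s_sigma is a well-defined map into the admissible sections ... *)
  (forall sigma : H -> H, symmetric_structure i p sigma ->
     exists s : A -> baer_sq i p,
       [/\ baer_section s, commutator_compatible s & is_s_sigma sigma s] /\
       (forall s' : A -> baer_sq i p, is_s_sigma sigma s' -> s' = s)) /\
  (* ... which is bijective onto them. *)
  (forall s : A -> baer_sq i p,
     baer_section s -> commutator_compatible s ->
     exists! sigma : H -> H, symmetric_structure i p sigma /\ is_s_sigma sigma s).
Proof.
case=> Cc [Ac [im [pm [ii [ps [pk ic]]]]]].
split.
- exact: (@part1 C H A i p Cc im pm ii ps pk ic).
- exact: (@part2 C H A i p Cc Ac im pm ii pk ic).
Qed.
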